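(* Let $R$ be a finite set of terminals, let $T$ be a spanning tree on vertex set $R$ (possibly with parallel edges in its ambient multigraph) with nonnegative edge costs $c$, and let $x$ be any feasible solution of the constraint system \[ \sum_{K:\,K\cap S\neq\varnothing} x_K(|K\cap S|-1)\le |S|-1\ \ \forall\, \varnothing\neq S\subseteq R,\qquad \sum_K x_K(|K|-1)=|R|-1,\qquad x_K\ge 0, \] where $K$ ranges over subsets of $R$ with $|K|\ge2$. Then \[ \sum_K x_K\,\mathrm{drop}_T(K)\ \ge\ c(T). \]
   Context: For $K\subseteq R$, $T/K$ denotes the multigraph obtained from $T$ by identifying all terminals of $K$ into a single vertex (edges keep their costs; loops may be discarded). $\mathrm{Drop}_T(K)=E(T)\setminus E(\mathrm{MST}(T/K))$ is the set of edges of $T$ not contained in a chosen minimum spanning tree of $T/K$, and $\mathrm{drop}_T(K)$ is its total cost, i.e. $\mathrm{drop}_T(K)=c(T)-\mathrm{mst}(T/K)$, where $\mathrm{mst}$ denotes the cost of a minimum spanning tree. $c(T)$ is the total cost of the edges of $T$. *)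

(* Defs.v *)
From HB Require Import structures.
From mathcomp Require Import all_boot all_order all_algebra.
Set Implicit Arguments. Unset Strict Implicit. Unset Printing Implicit Defensive.
Import Order.TTheory GRing.Theory Num.Theory.
Local Open Scope ring_scope.

(* The tree T lives on the terminal set V (= R, a finType); its edges are the
   elements of the finType E, edge e having endpoints (u e, v e).  Parallel
   edges are allowed.  For K : {set V}, the multigraph T/K is modelled on the
   vertex set V with all vertices of K identified: two vertices of V are
   adjacent in (the subgraph with edge set F of) T/K if they are both in K
   (identified) or joined by an edge of F. *)

Definition cadj (V E : finType) (u v : E -> V) (K : {set V}) (F : {set E}) : rel V :=
  fun a b => ((a \in K) && (b \in K)) ||
    [exists e in F, ((u e == a) && (v e == b)) || ((u e == b) && (v e == a))].

Definition is_loop (V E : finType) (u v : E -> V) (K : {set V}) (e : E) : bool :=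
  (u e == v e) || ((u e \in K) && (v e \in K)).

(* With K = set0 this is an ordinary spanning tree. *)
Definition spanning_tree_contr (V E : finType) (u v : E -> V) (K : {set V})
    (F : {set E}) : bool :=
  [forall a, forall b, connect (cadj u v K F) a b] &&
  [forall e in F, ~~ is_loop u v K e && ~~ connect (cadj u v K (F :\ e)) (u e) (v e)].

Definition cost (Rf : numDomainType) (E : finType) (c : E -> Rf) (F : {set E}) : Rf :=
  \sum_(e in F) c e.

Definition is_mst (Rf : numDomainType) (V E : finType) (u v : E -> V)
    (c : E -> Rf) (K : {set V}) (m : Rf) : Prop :=
  (exists2 F, spanning_tree_contr u v K F & cost c F = m) /\
  (forall F, spanning_tree_contr u v K F -> m <= cost c F).

Definition dropT (Rf : numDomainType) (E : finType) (c : E -> Rf) (mstK : Rf) : Rf :=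
  cost c setT - mstK.

(* Main.v *)
Require Import Defs.
From HB Require Import structures.
From Stdlib Require Import Lia.
From mathcomp Require Import all_boot all_order all_algebra.
Set Implicit Arguments. Unset Strict Implicit. Unset Printing Implicit Defensive.
Import Order.TTheory GRing.Theory Num.Theory.

Section Graph.
Variables (V E : finType) (u v : E -> V).
Implicit Types (K : {set V}) (F : {set E}).

Lemma cadj_sym K F : symmetric (cadj u v K F).
Proof.
move=> a b; rewrite /cadj andbC; congr (_ || _).
apply/existsP/existsP => -[e /andP[eF H]]; exists e; rewrite eF /=;
  by case/orP: H => ->; rewrite ?orbT.
Qed.

Lemma conn_sym K F : connect_sym (cadj u v K F).
Proof. exact/sym_connect_sym/cadj_sym. Qed.

Lemma conn_equiv (e R : rel V) : reflexive R -> transitive R -> subrel e R ->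
  subrel (connect e) R.
Proof.
move=> Rr Rt eR x _ /connectP[p ep ->]; elim: p x ep => //= y p IH x /andP[exy /IH].
exact/Rt/eR.
Qed.

Lemma cadj_mono K (K' : {set V}) F (F' : {set E}) : K \subset K' -> F \subset F' ->
  subrel (cadj u v K F) (cadj u v K' F').
Proof.
move=> /subsetP KK /subsetP FF a b /orP[/andP[aK bK]|/existsP[e /andP[eF H]]].
  by rewrite /cadj (KK _ aK) (KK _ bK).
by apply/orP; right; apply/existsP; exists e; rewrite (FF _ eF).
Qed.

Lemma conn_mono K (K' : {set V}) F (F' : {set E}) a b : K \subset K' -> F \subset F' ->
  connect (cadj u v K F) a b -> connect (cadj u v K' F') a b.
Proof.
move=> KK FF; apply: connect_sub => x y H; apply: connect1.
exact: cadj_mono H.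
Qed.

Lemma conn_remove K F e a b : e \in F ->
  connect (cadj u v K (F :\ e)) (u e) (v e) ->
  connect (cadj u v K F) a b -> connect (cadj u v K (F :\ e)) a b.
Proof.
move=> eF Huv; apply: connect_sub => x y /orP[H|/existsP[f /andP[fF H]]].
  by apply: connect1; rewrite /cadj H.
case: (eqVneq f e) => [fe|fe].
  subst f; case/orP: H => /andP[/eqP<- /eqP<-] //; by rewrite conn_sym.
apply: connect1; apply/orP; right; apply/existsP; exists f.
by rewrite !inE fe fF.
Qed.

End Graph.

Section Mst.
Variables (Rf : realFieldType) (V E : finType) (u v : E -> V) (c : E -> Rf).
Local Open Scope ring_scope.

Lemma mst_le_conn K m F : (forall e, 0 <= c e) -> is_mst u v c K m ->
  (forall a b, connect (cadj u v K F) a b) -> m <= cost c F.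
Proof.
move=> c0 [_ Hm]; move: {2}#|F| (leqnn #|F|) => n; elim: n F => [|n IH] F.
  move=> F0 Fc; apply: Hm; apply/andP; split.
    by apply/forallP=> a; apply/forallP=> b; apply: Fc.
  apply/forallP=> e; apply/implyP=> eF.
  by move: F0; rewrite leqn0 => /eqP/cards0_eq F0; rewrite F0 inE in eF.
move=> Fn Fc.
have [st|nst] := boolP (spanning_tree_contr u v K F); first exact: Hm.
have : ~~ [forall e in F, ~~ is_loop u v K e && ~~ connect (cadj u v K (F :\ e)) (u e) (v e)].
  apply: contra nst => H; apply/andP; split => //.
  by apply/forallP=> a; apply/forallP=> b; apply: Fc.
case/forallPn => e; rewrite negb_imply => /andP[eF].
rewrite negb_and !negbK => Hor.
have Huv : connect (cadj u v K (F :\ e)) (u e) (v e).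
  case/orP: Hor => // /orP[/eqP->|H]; first exact: connect0.
  by apply: connect1; rewrite /cadj H.
have Fc' : forall a b, connect (cadj u v K (F :\ e)) a b.
  by move=> a b; apply: conn_remove => //; apply: Fc.
have Fn' : (#|F :\ e| <= n)%N.
  by move: Fn; rewrite (cardsD1 e F) eF add1n ltnS.
apply: le_trans (IH _ Fn' Fc') _.
by rewrite /cost (big_setD1 e eF) /= lerDr c0.
Qed.
End Mst.

Section Lab.
Variables (V E : finType) (u v : E -> V).
Implicit Types (K : {set V}) (F A : {set E}) (lab : V -> V).

Definition rep K F lab := forall a b, (lab a == lab b) = connect (cadj u v K F) a b.
Definition mergeL lab (e : E) : V -> V :=
  fun y => if lab y == lab (v e) then lab (u e) else lab y.
Definition contrL lab K (k0 : V) : V -> V :=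
  fun y => if lab y \in lab @: K then lab k0 else lab y.

Lemma rep0 : rep set0 set0 id.
Proof.
move=> a b; apply/idP/idP => [/eqP->|]; first exact: connect0.
apply: (@conn_equiv _ _ (fun x y => x == y)).
- by move=> x.
- by move=> x y z /eqP-> /eqP->.
by move=> x y /orP[|/existsP[e]]; rewrite !inE.
Qed.

Lemma rep_merge K A lab e : rep K A lab -> rep K (e |: A) (mergeL lab e).
Proof.
move=> H a b.
have hA x y : lab x == lab y -> connect (cadj u v K (e |: A)) x y.
  by rewrite H; apply: conn_mono => //; apply: subsetUr.
have he : connect (cadj u v K (e |: A)) (u e) (v e).
  apply: connect1; apply/orP; right; apply/existsP; exists e.
  by rewrite setU11 !eqxx.
have sy := conn_sym u v K (e |: A).
apply/idP/idP.
  rewrite /mergeL; case: ifP => ha; case: ifP => hb /eqP hab.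
  - by apply: hA; rewrite (eqP ha) (eqP hb).
  - apply: (connect_trans (hA _ _ ha)); rewrite sy in he.
    apply: (connect_trans he); apply: hA; by rewrite hab.
  - apply: (connect_trans (hA a (u e) _)); first by rewrite hab.
    by apply: (connect_trans he); apply: hA; rewrite eq_sym.
  - by apply: hA; rewrite hab.
apply: (@conn_equiv _ _ (fun x y => mergeL lab e x == mergeL lab e y)) => //.
  by move=> x y z /eqP-> /eqP->.
have hl x y : lab x == lab y -> mergeL lab e x == mergeL lab e y.
  by rewrite /mergeL => /eqP->.
move=> x y /orP[hK|/existsP[f /andP[]]].
  by apply: hl; rewrite H; apply: connect1; rewrite /cadj hK.
rewrite !inE => /orP[/eqP->|fA] Hf.
  have hue : mergeL lab e (u e) = lab (u e) by rewrite /mergeL; case: ifP => // /eqP.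
  have hve : mergeL lab e (v e) = lab (u e) by rewrite /mergeL eqxx.
  by case/orP: Hf => /andP[/eqP<- /eqP<-]; rewrite hue hve.
apply: hl; rewrite H; apply: connect1; apply/orP; right; apply/existsP; exists f.
by rewrite fA.
Qed.

End Lab.

Section Lab2.
Variables (V E : finType) (u v : E -> V).
Implicit Types (K : {set V}) (F A : {set E}) (lab : V -> V).

Lemma imset_ident (S : {set V}) p q : p \in S -> q \in S -> p != q ->
  [set (if z == q then p else z) | z in S] = S :\ q.
Proof.
move=> pS qS pq; apply/setP=> y; rewrite in_setD1; apply/idP/idP.
  case/imsetP=> z zS ->; case: ifP => [_|/negbT]; first by rewrite pS pq.
  by move=> zq; rewrite zq.
case/andP=> yq yS; apply/imsetP; exists y => //; by rewrite (negbTE yq).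
Qed.

Lemma card_merge lab e :
  (#|mergeL u v lab e @: setT| + (lab (u e) != lab (v e)) = #|lab @: setT|)%N.
Proof.
set g := fun z => if z == lab (v e) then lab (u e) else z.
have -> : mergeL u v lab e @: setT = g @: (lab @: setT).
  by rewrite -imset_comp; apply: eq_imset.
have [huv|huv] := eqVneq (lab (u e)) (lab (v e)).
  rewrite addn0; have -> : g @: (lab @: setT) = lab @: setT; last by [].
  rewrite -[X in _ = X]imset_id; apply: eq_imset => z.
  by rewrite /g; case: eqP => // ->; rewrite huv.
rewrite imset_ident ?imset_f ?inE // (cardsD1 (lab (v e)) (lab @: setT)).
by rewrite imset_f ?inE // addnC.
Qed.

Lemma rep_contr K A lab k0 : k0 \in K -> rep u v set0 A lab ->
  rep u v K A (contrL lab K k0).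
Proof.
move=> k0K H a b.
have hA x y : lab x == lab y -> connect (cadj u v K A) x y.
  by rewrite H; apply: conn_mono => //; apply: sub0set.
have hK x y : x \in K -> y \in K -> connect (cadj u v K A) x y.
  by move=> xK yK; apply: connect1; rewrite /cadj xK yK.
have sy := conn_sym u v K A.
have k0L : lab k0 \in lab @: K by apply: imset_f.
apply/idP/idP.
  rewrite /contrL; case: ifP => ha; case: ifP => hb /eqP hab.
  - case/imsetP: ha => k1 k1K e1; case/imsetP: hb => k2 k2K e2.
    apply: (connect_trans (hA _ _ _)); first by rewrite e1.
    apply: (connect_trans (hK _ _ k1K k2K)).
    by apply: hA; rewrite e2.
  - by rewrite -hab k0L in hb.
  - by rewrite hab k0L in ha.
  - by apply: hA; rewrite hab.
apply: (@conn_equiv _ _ (fun x y => contrL lab K k0 x == contrL lab K k0 y)) => //.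
  by move=> x y z /eqP-> /eqP->.
move=> x y /orP[/andP[xK yK]|/existsP[f /andP[fA Hf]]].
  by rewrite /contrL !imset_f.
have : lab x == lab y.
  rewrite H; apply: connect1; apply/orP; right; apply/existsP; exists f.
  by rewrite fA.
by rewrite /contrL => /eqP->.
Qed.

Lemma card_contr K lab k0 : k0 \in K ->
  (#|contrL lab K k0 @: setT| + #|lab @: K| = #|lab @: setT| + 1)%N.
Proof.
move=> k0K.
set h := fun y => if y \in lab @: K then lab k0 else y.
set L := lab @: K; set S := lab @: setT.
have LS : L \subset S by apply: imsetS; apply: subsetT.
have k0L : lab k0 \in L by apply: imset_f.
have -> : contrL lab K k0 @: setT = h @: S.
  by rewrite -imset_comp; apply: eq_imset.
have -> : h @: S = lab k0 |: (S :\: L).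
  apply/setP=> y; apply/idP/idP.
    case/imsetP=> z zS ->; rewrite /h; case: ifP => zL; first by rewrite setU11.
    by rewrite !inE zL zS orbT.
  rewrite !inE => /orP[/eqP->|/andP[yL yS]]; apply/imsetP.
    by exists (lab k0); [apply: (subsetP LS) | rewrite /h k0L].
  by exists y => //; rewrite /h (negbTE yL).
rewrite cardsU1 !inE k0L /= -addnA.
have := cardsID L S; rewrite (setIidPr LS) => <-.
by rewrite addnC [(#|S :\: L| + _)%N]addnC.
Qed.

Lemma card_le_fun (f g : V -> V) : (forall a b, g a == g b -> f a == f b) ->
  (#|f @: setT| <= #|g @: setT|)%N.
Proof.
move=> H.
pose h := fun y => omap f [pick x | g x == y].
have <- : #|Some @: (f @: setT)| = #|f @: setT|.
  by apply: card_imset => x y [].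
apply: leq_trans (leq_imset_card h (g @: setT)).
apply: subset_leq_card; apply/subsetP => _ /imsetP[_ /imsetP[a _ ->] ->].
apply/imsetP; exists (g a); first exact: imset_f.
rewrite /h; case: pickP => [x /eqP/eqP gx|/(_ a)]; last by rewrite eqxx.
by rewrite /= (eqP (H _ _ gx)).
Qed.

Lemma card_rep K A f g : rep u v K A f -> rep u v K A g ->
  #|f @: setT| = #|g @: setT|.
Proof.
move=> Hf Hg; apply/eqP; rewrite eqn_leq !card_le_fun // => a b;
  by rewrite ?Hf ?Hg.
Qed.

End Lab2.

Section Part.
Variables (Rf : realFieldType) (V : finType) (x : {set V} -> Rf).
Local Open Scope ring_scope.

Lemma sum_blocks (f : V -> V) (K : {set V}) :
  (\sum_(y in f @: K) #|K :&: [set a | f a == y]| = #|K|)%N.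
Proof.
rewrite -[RHS]sum1_card [RHS](partition_big_imset f); apply: eq_bigr => y _.
rewrite -sum1_card; apply: eq_bigl => a; by rewrite !inE.
Qed.

Lemma block_cond (f : V -> V) (K : {set V}) y :
  (y \in f @: setT) && (K :&: [set a | f a == y] != set0) = (y \in f @: K).
Proof.
apply/idP/idP.
  case/andP=> _ /set0Pn[a]; rewrite !inE => /andP[aK /eqP <-]; exact: imset_f.
case/imsetP=> a aK ->; rewrite imset_f ?inE //=; apply/set0Pn; exists a.
by rewrite !inE aK eqxx.
Qed.

Lemma partition_ineq (f : V -> V) :
  (forall S : {set V}, S != set0 ->
     \sum_(K : {set V} | (2 <= #|K|)%N && (K :&: S != set0))
        x K * (#|K :&: S|%:R - 1) <= #|S|%:R - 1) ->
  \sum_(K : {set V} | (2 <= #|K|)%N) x K * (#|K|%:R - 1) = #|V|%:R - 1 ->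
  #|f @: setT|%:R - 1 <= \sum_(K : {set V} | (2 <= #|K|)%N) x K * (#|f @: K|%:R - 1).
Proof.
move=> Hs Htot.
set L := f @: setT.
pose B y := [set a | f a == y].
have Bne y : y \in L -> B y != set0.
  case/imsetP=> a _ ->; apply/set0Pn; exists a; by rewrite !inE.
have step2 : \sum_(y in L) \sum_(K : {set V} | (2 <= #|K|)%N && (K :&: B y != set0))
        x K * (#|K :&: B y|%:R - 1) <= #|V|%:R - #|L|%:R.
  apply: le_trans (ler_sum _ (fun y yL => Hs _ (Bne y yL))) _.
  rewrite sumrB sumr_const -natr_sum.
  have -> : (\sum_(i in L) #|B i| = #|V|)%N; last by [].
  by rewrite -cardsT -(sum_blocks f setT); apply: eq_bigr => y _; rewrite setTI.
have step3 : \sum_(y in L) \sum_(K : {set V} | (2 <= #|K|)%N && (K :&: B y != set0))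
        x K * (#|K :&: B y|%:R - 1) =
    \sum_(K : {set V} | (2 <= #|K|)%N) x K * (#|K|%:R - #|f @: K|%:R).
  rewrite (eq_bigr (fun y => \sum_(K : {set V} | (2 <= #|K|)%N)
        (if K :&: B y != set0 then x K * (#|K :&: B y|%:R - 1) else 0))); last first.
    by move=> y _; rewrite big_mkcondr.
  rewrite exchange_big; apply: eq_bigr => K _.
  rewrite -big_mkcondr -mulr_sumr; congr (_ * _).
  rewrite (eq_bigl (fun y => y \in f @: K)); last by move=> y; apply: block_cond.
  rewrite sumrB sumr_const -natr_sum; congr (_%:R - _).
  exact: sum_blocks.
rewrite step3 in step2.
have e : \sum_(K : {set V} | (2 <= #|K|)%N) x K * (#|f @: K|%:R - 1) =
   \sum_(K : {set V} | (2 <= #|K|)%N) x K * (#|K|%:R - 1) -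
   \sum_(K : {set V} | (2 <= #|K|)%N) x K * (#|K|%:R - #|f @: K|%:R).
  rewrite -sumrB; apply: eq_bigr => K _; rewrite -mulrBr; congr (_ * _).
  by rewrite opprB addrAC addrCA subrr addr0.
rewrite e Htot lerBrDr addrC -lerBrDr; apply: le_trans step2 _.
by rewrite opprB addrA subrK.
Qed.
End Part.

Section Kruskal.
Variables (V E : finType) (u v : E -> V) (s : seq E) (x0 : E).
Hypothesis s_uniq : uniq s.
Hypothesis s_all : forall e, e \in s.
Hypothesis tree : spanning_tree_contr u v set0 setT.

Definition labj j := foldl (mergeL u v) id (take j s).
Let es j := nth x0 s j.

Lemma set_rcons (t : seq E) y : [set e in rcons t y] = y |: [set e in t].
Proof. by apply/setP=> e; rewrite !inE mem_rcons inE. Qed.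

Lemma set_nil : [set e in ([::] : seq E)] = set0.
Proof. by apply/setP=> e; rewrite !inE. Qed.

Lemma set_all : [set e in s] = setT.
Proof. by apply/setP=> e; rewrite !inE s_all. Qed.

Lemma take_S j : (j < size s)%N -> take j.+1 s = rcons (take j s) (es j).
Proof. exact: take_nth. Qed.

Lemma labj_S j : (j < size s)%N -> labj j.+1 = mergeL u v (labj j) (es j).
Proof. by move=> js; rewrite /labj take_S // foldl_rcons. Qed.

Lemma labj_rep j : rep u v set0 [set e in take j s] (labj j).
Proof.
elim: j => [|j IH]; first by rewrite /labj take0 set_nil; exact: rep0.
have [js|js] := ltnP j (size s).
  by rewrite labj_S // take_S // set_rcons; apply: rep_merge.
by rewrite /labj !take_oversize ?(leq_trans js) // -(take_oversize js).
Qed.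

Lemma es_notin j : (j < size s)%N -> es j \notin take j s.
Proof.
move=> js; have := s_uniq; rewrite -{1}(cat_take_drop j s) cat_uniq.
case/and3P=> _ /hasPn H _; apply: H; rewrite (drop_nth x0 js) inE eqxx //.
Qed.

Lemma tree_conn a b : connect (cadj u v set0 setT) a b.
Proof. by case/andP: tree => /forallP/(_ a)/forallP/(_ b). Qed.

Lemma tree_acyc e : ~~ connect (cadj u v set0 (setT :\ e)) (u e) (v e).
Proof. by case/andP: tree => _ /forall_inP/(_ e (in_setT e))/andP[]. Qed.

Definition M j := #|labj j @: setT|.

Lemma M_step j : (j < size s)%N -> M j = (M j.+1).+1.
Proof.
move=> js; rewrite /M labj_S // -(card_merge u v (labj j) (es j)).
suff -> : labj j (u (es j)) != labj j (v (es j)) by rewrite addn1.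
rewrite labj_rep; apply: contra (tree_acyc (es j)); apply: conn_mono => //.
apply/subsetP=> e; rewrite !inE => et; rewrite andbT.
by apply: contraNneq (es_notin js) => <-.
Qed.

Lemma M_end : M (size s) = 1%N.
Proof.
rewrite /M; have -> : labj (size s) @: setT = [set labj (size s) (u x0)].
  apply/setP=> y; rewrite inE; apply/idP/idP => [/imsetP[a _ ->]|/eqP->].
    by rewrite labj_rep take_oversize // set_all; exact: tree_conn.
  exact: imset_f.
by rewrite cards1.
Qed.

Lemma M_val j : (j <= size s)%N -> M j = (size s - j).+1.
Proof.
move=> js.
have H k : (k <= size s)%N -> M (size s - k) = k.+1.
  elim: k => [|k IH] ks; first by rewrite subn0 M_end.
  rewrite M_step; last by rewrite -subSn // subSS leq_subr.
  by rewrite -subSn // subSS IH // ltnW.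
by rewrite -{1}(subKn js) H // leq_subr.
Qed.

Section K.
Variables (K : {set V}) (k0 : V).
Hypothesis k0K : k0 \in K.

Definition contrj j := contrL (labj j) K k0.
Lemma contrj_rep j : rep u v K [set e in take j s] (contrj j).
Proof. exact: rep_contr k0K (labj_rep j). Qed.

Definition Nn j := #|contrj j @: setT|.
Definition chosen j := contrj j (u (es j)) != contrj j (v (es j)).

Lemma N_step j : (j < size s)%N -> Nn j = (Nn j.+1 + chosen j)%N.
Proof.
move=> js; rewrite /Nn -(card_merge u v (contrj j) (es j)); congr (_ + _)%N.
apply: (card_rep (rep_merge (es j) (contrj_rep j))).
by rewrite -set_rcons -take_S //; apply: contrj_rep.
Qed.

Definition FK := [set e | contrj (index e s) (u e) != contrj (index e s) (v e)].

Lemma inFK j : (j < size s)%N -> (es j \in FK) = chosen j.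
Proof. by move=> js; rewrite inE /es index_uniq. Qed.

Lemma count_F j : (j <= size s)%N ->
  (count (mem FK) (drop j s) + Nn (size s))%N = Nn j.
Proof.
move=> js.
have H k : (k <= size s)%N ->
    (count (mem FK) (drop (size s - k) s) + Nn (size s))%N = Nn (size s - k).
  elim: k => [|k IH] ks; first by rewrite subn0 drop_oversize.
  have jl : (size s - k.+1 < size s)%N by rewrite -subSn // subSS leq_subr.
  rewrite (drop_nth x0 jl) /= inFK // [RHS]N_step // subnSK // -IH; last exact: ltnW.
  by rewrite -addnA addnC.
by have := H (size s - j)%N (leq_subr _ _); rewrite subKn.
Qed.

Lemma Nend_pos : (0 < Nn (size s))%N.
Proof. by rewrite /Nn card_gt0; apply/set0Pn; exists (contrj (size s) (u x0)); apply: imset_f. Qed.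

Lemma FK_conn a b : connect (cadj u v K FK) a b.
Proof.
have H j : forall a b, connect (cadj u v K [set e in take j s]) a b ->
    connect (cadj u v K FK) a b.
  elim: j => [|j IH].
    move=> a' b'; rewrite take0 set_nil; apply: conn_mono => //; exact: sub0set.
  have [js|js] := ltnP j (size s); last first.
    by rewrite !take_oversize ?(leq_trans js) // -(take_oversize js).
  rewrite take_S // set_rcons; apply: connect_sub => a' b'.
  case/orP=> [hK|/existsP[f /andP[]]]; first by apply: connect1; rewrite /cadj hK.
  rewrite in_setU1 => /orP[/eqP ->|fA] Hf; last first.
    apply: IH; apply: connect1; apply/orP; right; apply/existsP; exists f.
    by rewrite fA.
  have [hc|hc] := boolP (chosen j).
    apply: connect1; apply/orP; right; apply/existsP; exists (es j).
    by rewrite inFK // hc.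
  have cuv : connect (cadj u v K FK) (u (es j)) (v (es j)).
    by apply: IH; rewrite -contrj_rep; move: hc; rewrite negbK.
  case/orP: Hf => /andP[/eqP<- /eqP<-] //; by rewrite conn_sym.
apply: (H (size s)); rewrite take_oversize // set_all.
by apply: conn_mono (tree_conn a b) => //; apply: sub0set.
Qed.

Lemma level j : (j <= size s)%N ->
  (#|labj j @: K| <= (count (predC (mem FK)) (drop j s)).+1)%N.
Proof.
move=> js.
have h1 := count_predC (mem FK) (drop j s); rewrite size_drop in h1.
have h2 := count_F js.
have h3 := card_contr (labj j) k0K; rewrite -/(M j) M_val // in h3.
have h4 := Nend_pos.
rewrite -/(Nn j) in h3.
move: h1 h2 h3 h4; set a := count _ _; set b := count _ _; set n1 := Nn _; set n2 := Nn _; set L := #|_|.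
move=> h1 h2 h3 /ssrnat.leP h4; apply/ssrnat.leP; move: h1 h2 h3; rewrite -?plusE -?minusE; lia.
Qed.

End K.
End Kruskal.
Local Open Scope ring_scope.

Lemma abel_gen (Rf : realFieldType) (T : Type) (c w : T -> Rf) (l : seq T) a :
  sorted (fun e f => c e <= c f) l -> all (fun e => a <= c e) l ->
  (forall j, 0 <= \sum_(e <- drop j l) w e) ->
  a * \sum_(e <- l) w e <= \sum_(e <- l) c e * w e.
Proof.
elim: l a => [|e l IH] a /=; first by rewrite !big_nil mulr0.
move=> Hs /andP[ae Ha] Hd.
have Hl : all (fun f => c e <= c f) l.
  have tr : transitive (fun x y : T => c x <= c y) by move=> ? ? ?; apply: le_trans.
  exact: order_path_min tr Hs.
have Hd' : forall j, 0 <= \sum_(f <- drop j l) w f by move=> j; apply: (Hd j.+1).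
have := IH (c e) (path_sorted Hs) Hl Hd'.
rewrite !big_cons => H.
have W0 : 0 <= w e + \sum_(f <- l) w f by have := Hd 0%N; rewrite drop0 big_cons.
apply: le_trans (ler_wpM2r W0 ae) _.
by rewrite mulrDr lerD2l.
Qed.

Lemma abel (Rf : realFieldType) (T : Type) (c w : T -> Rf) (l : seq T) :
  sorted (fun e f => c e <= c f) l -> (forall e, 0 <= c e) ->
  (forall j, 0 <= \sum_(e <- drop j l) w e) ->
  0 <= \sum_(e <- l) c e * w e.
Proof.
move=> Hs c0 Hd; have := abel_gen (a := 0) Hs _ Hd; rewrite mul0r; apply.
by elim: l {Hs Hd} => //= e l ->; rewrite c0.
Qed.
Local Open Scope ring_scope.

Lemma count_natr (Rf : realFieldType) (T : eqType) (a : pred T) (l : seq T) :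
  \sum_(e <- l) ((a e)%:R : Rf) = (count a l)%:R.
Proof.
rewrite -sum1_count natr_sum [RHS]big_mkcond /=; apply: eq_bigr => e _.
by case: (a e).
Qed.

Lemma sum1_seq (Rf : realFieldType) (T : Type) (l : seq T) :
  \sum_(e <- l) (1 : Rf) = (size l)%:R.
Proof. by rewrite -sum1_size natr_sum. Qed.

Lemma cost_compl (Rf : realFieldType) (E : finType) (c : E -> Rf) (F : {set E}) :
  cost c setT - cost c F = \sum_e c e * (e \notin F)%:R.
Proof.
rewrite /cost (big_setID F) /= setTI addrC addrK.
rewrite big_mkcond /=; apply: eq_bigr => e _; rewrite !inE andbT.
by case: (e \in F); rewrite ?mulr1 ?mulr0.
Qed.

Theorem lemma1 (Rf : realFieldType) (V E : finType) (u v : E -> V)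
    (c : E -> Rf) (x : {set V} -> Rf) (mst : {set V} -> Rf) :
  (forall e, 0 <= c e) ->
  spanning_tree_contr u v set0 setT ->
  (forall S : {set V}, S != set0 ->
     \sum_(K : {set V} | (2 <= #|K|)%N && (K :&: S != set0))
        x K * (#|K :&: S|%:R - 1) <= #|S|%:R - 1) ->
  \sum_(K : {set V} | (2 <= #|K|)%N) x K * (#|K|%:R - 1) = #|V|%:R - 1 ->
  (forall K : {set V}, (2 <= #|K|)%N -> 0 <= x K) ->
  (forall K : {set V}, (2 <= #|K|)%N -> is_mst u v c K (mst K)) ->
  cost c setT <= \sum_(K : {set V} | (2 <= #|K|)%N) x K * dropT c (mst K).
Proof.
move=> c0 tree Hs Htot x0 Hmst.
have mstT (K : {set V}) : (2 <= #|K|)%N -> mst K <= cost c setT.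
  move=> K2; apply: mst_le_conn (Hmst K K2) _ => // a b.
  by apply: conn_mono (tree_conn tree a b) => //; apply: sub0set.
case: (pickP (@predT E)) => [e0 _|E0]; last first.
  have -> : cost c setT = 0 by rewrite /cost big1 // => e; have := E0 e.
  apply: sumr_ge0 => K K2; apply: mulr_ge0; first exact: x0.
  by rewrite /dropT subr_ge0 mstT.
set s := sort (fun e f : E => c e <= c f) (enum E).
have s_uniq : uniq s by rewrite sort_uniq enum_uniq.
have s_all : forall e, e \in s by move=> e; rewrite mem_sort mem_enum.
have s_sorted : sorted (fun e f : E => c e <= c f) s.
  by apply: sort_sorted => a b; exact: le_total.
pose pk (K : {set V}) := odflt (u e0) [pick k in K].
have pkK (K : {set V}) : (2 <= #|K|)%N -> pk K \in K.
  rewrite /pk; case: pickP => [k kK|K0] //=.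
  by move/eq_card0: K0 => ->.
pose FF K := FK u v s K (pk K).
pose mu e := \sum_(K : {set V} | (2 <= #|K|)%N) x K * (e \notin FF K)%:R.
have stepA j : 0 <= \sum_(e <- drop j s) (mu e - 1).
  have [js|js] := leqP j (size s); last by rewrite drop_oversize ?big_nil // ltnW.
  rewrite sumrB sum1_seq size_drop /mu exchange_big /=.
  have M1 := M_val e0 s_uniq s_all tree js.
  have P1 := partition_ineq (labj u v s j) Hs Htot.
  rewrite /M in M1; rewrite M1 -addn1 natrD addrK in P1.
  rewrite subr_ge0; apply: le_trans P1 _; apply: ler_sum => K K2.
  rewrite -mulr_sumr; apply: ler_wpM2l; first exact: x0.
  rewrite count_natr lerBlDr.
  rewrite natr1 ler_nat.
  by move: (level e0 s_uniq s_all tree (pkK K K2) js); rewrite /FF; apply: leq_trans; rewrite leqnn.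
have stepB := abel s_sorted c0 stepA.
rewrite (big_uniq _ s_uniq) /= in stepB.
rewrite (eq_bigl predT) in stepB; last by move=> e; rewrite s_all.
have costT : cost c setT = \sum_e c e by rewrite /cost; apply: eq_bigl => e; rewrite inE.
rewrite costT.
apply: le_trans (_ : \sum_e c e * mu e <= _).
  move: stepB.
  rewrite (eq_bigr (fun e => c e * mu e - c e)); last by move=> e _; rewrite mulrBr mulr1.
  by rewrite sumrB subr_ge0.
rewrite /mu; under eq_bigr => e _ do rewrite mulr_sumr.
rewrite exchange_big /=; apply: ler_sum => K K2.
under eq_bigr => e _ do rewrite mulrCA.
rewrite -mulr_sumr; apply: ler_wpM2l; first exact: x0.
rewrite -cost_compl /dropT lerD2l lerN2.
apply: mst_le_conn (Hmst K K2) _ => //.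
move=> a b; exact: (FK_conn e0 s_uniq s_all tree (pkK K K2)).
Qed.
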